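(* Let $X$ be a separable metric space endowed with the universal $\sigma$-algebra $\mathscr U(X)$, and let $\mathbb P$ be the completion of a Borel probability measure on $X$ restricted to $\mathscr U(X)$. Assume that $\mathbb P_n$ converges weakly to $\mathbb Q$ (the completion of a Borel measure restricted to $\mathscr U(X)$), where $\mathbb P_n(E)=\mathbb P(E\cap A_n)$ for a sequence of sets $A_n\in\mathscr U(X)$. Then for every measurable set $E\in\mathscr U(X)$, $\lim_{n\to\infty}\mathbb P_n(E)=\mathbb Q(E)$.
   Context: $\mathscr U(X)$ is the intersection over all $\sigma$-finite Borel measures $\nu$ on $X$ of the $\nu$-completion $\sigma$-algebras. Weak convergence means $\int f\,d\mathbb P_n\to\int f\,d\mathbb Q$ for all bounded continuous $f$. *)

(* Defs.v *)
From HB Require Import structures.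
From mathcomp Require Import all_boot all_order all_algebra.
From mathcomp Require Import all_classical all_reals all_analysis.
Set Implicit Arguments. Unset Strict Implicit. Unset Printing Implicit Defensive.
Import Order.TTheory GRing.Theory Num.Theory numFieldTopology.Exports.
Local Open Scope classical_set_scope.
Local Open Scope ring_scope.

(* Metric spaces with a distinguished point (needed to build measurable
   types in mathcomp-analysis; harmless since a probability measure lives
   on a nonempty space). *)
#[short(type="pmetricType")]
HB.structure Definition PointedMetric (K : numDomainType) :=
  { M of Pointed M & Metric K M }.

Definition separable (T : topologicalType) :=
  exists D : set T, countable D /\ dense D.

Definition borel_t (T : ptopologicalType) := g_sigma_algebraType (@open T).

Definition completed_sets (R : realType) (T : ptopologicalType)
  (nu : set (borel_t T) -> \bar R) : set (set T) :=
  [set A | exists B N, [/\ measurable (B : set (borel_t T)),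
                          nu.-negligible (N : set (borel_t T)) & A = B `|` N]].

Definition universal_sets (R : realType) (T : ptopologicalType) : set (set T) :=
  [set A | forall nu : {measure set (borel_t T) -> \bar R},
      sigma_finite setT nu -> completed_sets nu A].

Definition univ_t (R : realType) (T : ptopologicalType) :=
  g_sigma_algebraType (@universal_sets R T).

Definition is_completion_of (R : realType) (T : ptopologicalType)
  (mu : set (borel_t T) -> \bar R) (P : set (univ_t R T) -> \bar R) :=
  forall (B N : set T), measurable (B : set (borel_t T)) ->
    mu.-negligible (N : set (borel_t T)) ->
    measurable (B `|` N : set (univ_t R T)) -> P (B `|` N) = mu B.

(* Main.v *)
Require Import Defs.
From HB Require Import structures.
From mathcomp Require Import all_boot all_order all_algebra.
From mathcomp Require Import all_classical all_reals all_analysis.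
From mathcomp Require Import lra.
From mathcomp Require Import measurable_realfun.
Import Order.TTheory GRing.Theory Num.Theory numFieldTopology.Exports.
Local Open Scope classical_set_scope.
Local Open Scope ring_scope.
Set Implicit Arguments. Unset Strict Implicit.

Section S.
Context (R : realType) (T : pmetricType R).
Local Notation BT := (borel_t T).
Local Notation UT := (univ_t R T).

Lemma borel_univ (S : set T) : measurable (S : set BT) -> measurable (S : set UT).
Proof.
move=> mS; apply: sub_sigma_algebra => nu _.
exists S, set0; split => //; first exact: negligible_set0.
by rewrite setU0.
Qed.

Lemma open_borel (S : set T) : open S -> measurable (S : set BT).
Proof. by move=> oS; apply: sub_sigma_algebra. Qed.

Lemma closed_borel (S : set T) : closed S -> measurable (S : set BT).
Proof.
move=> cS; rewrite -(setCK S); apply: measurableC; apply: open_borel.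
exact: closed_openC.
Qed.

Lemma cont_mfun (f : T -> R) : continuous f -> measurable_fun [set: UT] f.
Proof.
move=> /continuousP cf; apply: (measurability _ (measurable_realfun.RGenOpens.measurableE R)).
move=> _ [_ [a [b ->] <-]]; rewrite setTI; apply: borel_univ; apply: open_borel.
exact/cf/interval_open.
Qed.

Definition nbh (F : set T) (k : nat) : set T :=
  \bigcup_(a in F) interior (ball a k.+1%:R^-1).

Lemma nbh_open F k : open (nbh F k).
Proof. by apply: bigcup_open => a _; exact: open_interior. Qed.

Lemma nbh_sub F k : F `<=` nbh F k.
Proof. by move=> a Fa; exists a => //; apply: nbhsx_ballx. Qed.

Lemma nbh_decr F : nonincreasing_seq (nbh F).
Proof.
move=> k m /= km; apply/subsetPset => x [a Fa ia]; exists a => //.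
move: ia; apply: interiorS; apply: le_ball.
by rewrite lef_pV2 ?posrE // ler_nat ltnS.
Qed.

Lemma nbh_cap F : closed F -> \bigcap_k nbh F k = F.
Proof.
move=> cF; apply/seteqP; split; last first.
  by move=> x Fx k _; apply: nbh_sub.
move=> x Hx; rewrite (closure_id F).1 //.
move=> B /nbhs_ballP [r r0 rB].
have [k _ kr] : exists2 k : nat, True & k.+1%:R^-1 < r.
  have := near_infty_natSinv_lt (PosNum r0) => -[N _ HN].
  by exists N => //; apply: HN => /=.
have [a Fa /interior_subset ia] := Hx k I.
exists a; split => //; apply: rB; apply: (le_ball (ltW kr)).
exact: ball_sym.
Qed.


Lemma ury (F : set T) k : closed F -> exists f : T -> R,
  [/\ continuous f, (forall x, 0 <= f x <= 1), (forall x, F x -> f x = 1) &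
      (forall x, ~ nbh F k x -> f x = 0)].
Proof.
move=> cF.
have sep : uniform_separator (~` nbh F k) F.
  apply: (normal_separatorP (R:=R)).1.
  - exact: (@pseudometric_normal R T).
  - exact: open_closedC (nbh_open _ _).
  - exact: cF.
  - by apply/disjoints_subset => x nx Fx; apply: nx; apply: nbh_sub.
case/(uniform_separatorP (R:=R) _ _).1: sep => f [cf f01 f0 f1].
exists f; split => //.
- move=> x; have := f01 (f x) (ex_intro2 _ _ x I erefl).
  by rewrite /= in_itv /=.
- by move=> x Fx; exact: (f1 (f x) (ex_intro2 _ _ x Fx erefl)).
- by move=> x nx; exact: (f0 (f x) (ex_intro2 _ _ x nx erefl)).
Qed.

Lemma mu_nbh (m : {measure set UT -> \bar R}) (F : set T) : closed F ->
  (m [set: UT] < +oo)%E -> (fun k => m (nbh F k)) @ \oo --> m F.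
Proof.
move=> cF mfin.
have mN k : measurable (nbh F k : set UT).
  by apply: borel_univ; apply: open_borel; apply: nbh_open.
have := @nonincreasing_cvg_mu _ UT R m (nbh F) _ mN _ (nbh_decr F).
rewrite nbh_cap //; apply.
- by apply: le_lt_trans mfin; apply: le_measure; rewrite ?inE //.
- by apply: borel_univ; apply: closed_borel.
Qed.

Lemma int_bounds (m : {measure set UT -> \bar R}) (F V : set T) (f : T -> R) :
  measurable (F : set UT) -> measurable (V : set UT) -> continuous f ->
  (forall x, 0 <= f x <= 1) -> (forall x, F x -> f x = 1) ->
  (forall x, ~ V x -> f x = 0) ->
  (m F <= \int[m]_x (f x)%:E /\ \int[m]_x (f x)%:E <= m V)%E.
Proof.
move=> mF mV cf f01 f1 f0.
have mf : measurable_fun [set: UT] (fun x => (f x)%:E).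
  by apply/measurable_EFinP; apply: cont_mfun.
split.
- have -> : m F = (\int[m]_x (\1_F x)%:E)%E.
    by rewrite integral_indic // setIT.
  apply: (@ge0_le_integral _ _ _ m setT measurableT) => //;
    try (by apply/measurable_EFinP; apply: measurable_indic).
  move=> x _; rewrite lee_fin indicE; case: (boolP (x \in F)) => [/set_mem Fx|_].
      by rewrite f1.
    by case/andP: (f01 x).
- have -> : m V = (\int[m]_x (\1_V x)%:E)%E.
    by rewrite integral_indic // setIT.
  apply: (@ge0_le_integral _ _ _ m setT measurableT) => //;
    try (by move=> x _; rewrite lee_fin; case/andP: (f01 x));
    try (by apply/measurable_EFinP; apply: measurable_indic).
  move=> x _; rewrite lee_fin indicE; case: (boolP (x \in V)) => [_|/negP Vx].
      by case/andP: (f01 x).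
    by rewrite f0 // => Vx'; apply: Vx; apply/mem_set.
Qed.

Lemma ecvg_ub (u : nat -> \bar R) (l : \bar R) e : l \is a fin_num ->
  u @ \oo --> l -> 0 < e -> \forall n \near \oo, (u n <= l + e%:E)%E.
Proof.
move=> fl; rewrite -(fineK fl) => /fine_cvgP [ufin /cvgrPdist_le /(_ e)] H e0.
apply: (filterS2 _ _ ufin (H e0)) => n ufn /=; rewrite ler_distl => /andP[h _].
rewrite -(fineK ufn) -EFinD lee_fin; lra.
Qed.

Lemma ecvg_lb (u : nat -> \bar R) (l : \bar R) e : l \is a fin_num ->
  u @ \oo --> l -> 0 < e -> \forall n \near \oo, (l - e%:E <= u n)%E.
Proof.
move=> fl; rewrite -(fineK fl) => /fine_cvgP [ufin /cvgrPdist_le /(_ e)] H e0.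
apply: (filterS2 _ _ ufin (H e0)) => n ufn /=; rewrite ler_distl => /andP[_ h].
rewrite -(fineK ufn) -EFinB lee_fin; lra.
Qed.

Lemma ecvg_from (u : nat -> \bar R) (l : R) :
  (forall e, 0 < e -> \forall n \near \oo,
     ((l - e)%:E <= u n)%E /\ (u n <= (l + e)%:E)%E) -> u @ \oo --> l%:E.
Proof.
move=> H; apply/fine_cvgP; split.
  have := H 1 ltr01; apply: filterS => n [h1 h2].
  by rewrite fin_numElt (lt_le_trans _ h1) ?ltNyr // (le_lt_trans h2) ?ltry.
apply/cvgrPdist_le => e e0; have := H e e0; apply: filterS => n [h1 h2].
have fu : u n \is a fin_num.
  by rewrite fin_numElt (lt_le_trans _ h1) ?ltNyr // (le_lt_trans h2) ?ltry.
move: h1 h2; rewrite -(fineK fu) !lee_fin /= => h1 h2.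
rewrite ler_distl; apply/andP; split; lra.
Qed.

End S.

Section Main.
Context (R : realType) (T : pmetricType R) (mu : probability (borel_t T) R)
  (P : {measure set (univ_t R T) -> \bar R}) (hP : is_completion_of mu P)
  (nuQ : {measure set (borel_t T) -> \bar R})
  (Q : {measure set (univ_t R T) -> \bar R}) (hQ : is_completion_of nuQ Q)
  (A : nat -> set (univ_t R T)) (mA : forall n, measurable (A n))
  (hweak : forall f : T -> R, continuous f ->
     (exists M : R, forall x, `|f x| <= M) ->
     (\int[mrestr P (mA n)]_x (f x)%:E)%E @[n --> \oo] -->
       (\int[Q]_x (f x)%:E)%E).
Local Notation BT := (borel_t T).
Local Notation UT := (univ_t R T).
Local Notation Pn n := (mrestr P (mA n)).

Lemma P1 : P setT = 1%E.
Proof.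
have := @hP setT set0 (measurableT : measurable (setT : set BT)) (negligible_set0 mu).
rewrite setU0 probability_setT; apply; exact: measurableT.
Qed.

Lemma Pfin (E : set UT) : measurable E -> P E \is a fin_num.
Proof.
move=> mE; rewrite ge0_fin_numE //; apply: (@le_lt_trans _ _ (P setT)).
  by apply: le_measure; rewrite ?inE.
by rewrite P1 ltry.
Qed.

Lemma int1 (m : {measure set UT -> \bar R}) :
  (\int[m]_x ((cst (1:R)) x)%:E = m setT)%E.
Proof.
transitivity (\int[m]_x (cst 1%E x))%E; first by [].
by rewrite integral_cst // mul1e.
Qed.

Lemma Qconv : (fun n => P (A n)) @ \oo --> Q setT.
Proof.
have hb : exists M : R, forall x : T, `|cst (1:R) x| <= M.
  by exists 1 => x; rewrite /cst normr1.
have h := @hweak (cst 1) (@cst_continuous _ _ (1:R)) hb.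
rewrite int1 in h.
move: h; rewrite (_ : (fun n => _) = (fun n => P (A n))) //.
by apply: funext => n; rewrite int1 /= /mrestr setTI.
Qed.

Lemma QT1 : (Q setT <= 1)%E.
Proof.
rewrite -(cvg_lim _ Qconv) //; apply: lime_le.
  by apply/cvg_ex; eexists; exact: Qconv.
apply: nearW => n; rewrite -P1; apply: le_measure; rewrite ?inE //.
Qed.

Lemma QTfin : (Q setT < +oo)%E.
Proof. by apply: le_lt_trans QT1 _; rewrite ltry. Qed.

Lemma Qfin (E : set UT) : measurable E -> Q E \is a fin_num.
Proof.
move=> mE; rewrite ge0_fin_numE //; apply: le_lt_trans QTfin.
by apply: le_measure; rewrite ?inE.
Qed.

Lemma PnE n (E : set UT) : Pn n E = P (E `&` A n).
Proof. by []. Qed.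


Lemma closed_UT (F : set T) : closed F -> measurable (F : set UT).
Proof. by move=> cF; apply: borel_univ; apply: closed_borel. Qed.

Lemma open_UT (F : set T) : open F -> measurable (F : set UT).
Proof. by move=> cF; apply: borel_univ; apply: open_borel. Qed.

Lemma closed_ub (F : set T) : closed F -> forall e, 0 < e ->
  \forall n \near \oo, (Pn n F <= Q F + e%:E)%E.
Proof.
move=> cF e e0.
have mF := closed_UT cF.
have mN k : measurable (nbh F k : set UT) by apply: open_UT; apply: nbh_open.
have e20 : 0 < e / 2 by rewrite divr_gt0.
have [k _ Hk] := ecvg_ub (Qfin mF) (mu_nbh cF QTfin) e20.
have Hk' : (Q (nbh F k) <= Q F + (e / 2)%:E)%E by exact: Hk k (leqnn k).
have [f [cf f01 f1 f0]] := ury k cF.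
have fb : exists M : R, forall x, `|f x| <= M.
  exists 1 => x; have /andP[h1 h2] := f01 x; by rewrite ger0_norm.
have hw := hweak cf fb.
have [iQ1 iQ2] := int_bounds Q mF (mN k) cf f01 f1 f0.
have ifin : (\int[Q]_x (f x)%:E)%E \is a fin_num.
  rewrite ge0_fin_numE; last first.
    by apply: integral_ge0 => x _; rewrite lee_fin; case/andP: (f01 x).
  apply: (le_lt_trans iQ2); apply: (le_lt_trans _ QTfin).
  by apply: le_measure; rewrite ?inE.
have := ecvg_ub ifin hw e20; apply: filterS => n Hn.
have [iP1 _] := int_bounds (Pn n) mF (mN k) cf f01 f1 f0.
apply: (le_trans iP1); apply: (le_trans Hn).
have -> : (e%:E = (e / 2)%:E + (e / 2)%:E)%E by rewrite -EFinD -splitr.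
rewrite addeA; apply: leeD => //; exact: le_trans iQ2 Hk'.
Qed.

Lemma open_lb (V : set T) : open V -> forall e, 0 < e ->
  \forall n \near \oo, (Q V - e%:E <= Pn n V)%E.
Proof.
move=> oV e e0.
have cC : closed (~` V) by exact: open_closedC.
have mC := closed_UT cC.
have mV := open_UT oV.
have e20 : 0 < e / 2 by rewrite divr_gt0.
have := closed_ub cC e20; have := ecvg_lb (Qfin measurableT) Qconv e20.
apply: filterS2 => n h1 h2.
have PV : Pn n V = (P (A n) - P (~` V `&` A n))%E.
  rewrite PnE [~` V `&` _]setIC -measureD //; last by rewrite -ge0_fin_numE // Pfin.
  by rewrite setDE setCK setIC.
have QV : Q V = (Q setT - Q (~` V))%E.
  have -> : ~` V = setT `&` ~` V by rewrite setTI.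
  rewrite -measureD //; last by rewrite QTfin.
  by rewrite setTD setCK.
move: h1 h2; rewrite PV QV PnE.
rewrite -[Q setT](fineK (Qfin measurableT)) -[Q (~` V)](fineK (Qfin mC)).
rewrite -[P (A n)](fineK (Pfin (mA n))).
rewrite -[P (~` V `&` A n)](fineK (Pfin (measurableI _ _ mC (mA n)))).
rewrite -!EFinB -!EFinD !lee_fin => h1 h2; lra.
Qed.


Lemma msplit (m : {measure set UT -> \bar R}) (X Y : set UT) :
  measurable X -> measurable Y -> X `<=` Y -> m Y = (m X + m (Y `\` X))%E.
Proof.
move=> mX mY XY; rewrite -measureU ?setDUK ?setDIK //.
exact: measurableD.
Qed.

Definition Reg (S : set T) := forall e : R, 0 < e ->
  (exists F, [/\ closed F, F `<=` S & (P (S `\` F) <= e%:E)%E]) /\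
  (exists G, [/\ closed G, G `<=` ~` S & (P (~` S `\` G) <= e%:E)%E]).

Lemma PTfin : (P setT < +oo)%E.
Proof. by rewrite P1 ltry. Qed.

Lemma Reg_open V : open V -> Reg V.
Proof.
move=> oV e e0; split; last first.
  exists (~` V); split => //; first exact: open_closedC.
  by rewrite setDv measure0 lee_fin ltW.
have cC : closed (~` V) by exact: open_closedC.
have mC := closed_UT cC.
have mV := open_UT oV.
have [k _ Hk] := ecvg_ub (Pfin mC) (mu_nbh cC PTfin) e0.
have {Hk} Hk : (P (nbh (~` V) k) <= P (~` V) + e%:E)%E by exact: Hk k (leqnn k).
have mN : measurable (nbh (~` V) k : set UT) by apply: open_UT; apply: nbh_open.
exists (~` nbh (~` V) k); split.
- exact: open_closedC (nbh_open _ _).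
- move=> x nx; apply: contrapT => nVx; apply: nx; exact: nbh_sub.
- have -> : V `\` ~` nbh (~` V) k = nbh (~` V) k `\` ~` V.
    by rewrite !setDE !setCK setIC.
  have := msplit P mC mN (@nbh_sub _ _ (~` V) k).
  move: Hk; rewrite -[P (~` V)](fineK (Pfin mC)) -[P (nbh _ _)](fineK (Pfin mN)).
  rewrite -[P (_ `\` ~` V)](fineK (Pfin (measurableD mN mC))).
  by rewrite -!EFinD !lee_fin => h1 [h2]; lra.
Qed.

Lemma Reg_compl S : Reg S -> Reg (~` S).
Proof.
move=> H e e0; have [[F [cF FS PF]] [G [cG GS PG]]] := H e e0; split.
  by exists G.
by exists F; rewrite setCK.
Qed.

Lemma Reg_T : Reg setT.
Proof.
move=> e e0; split.
  by exists setT; split => //; rewrite setDv measure0 lee_fin ltW.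
exists set0; split => //; first exact: closed0.
by rewrite setCT set0D measure0 lee_fin ltW.
Qed.


Lemma Reg_bigcup (F : nat -> set T) : (forall k, measurable (F k : set UT)) ->
  (forall k, Reg (F k)) -> Reg (\bigcup_k F k).
Proof.
move=> mF RF e e0.
have e20 : 0 < e / 2 by rewrite divr_gt0.
have mU : measurable (\bigcup_k F k : set UT) by exact: bigcupT_measurable.
have pos k (c : R) : 0 < c -> 0 < c / (2 ^ k.+1)%:R.
  by move=> c0; rewrite divr_gt0 // ltr0n expn_gt0.
split.
- have [C HC] := choice (fun k => ((RF k) _ (pos k _ e20)).1).
  have cC k : closed (C k) by case: (HC k).
  have CF k : C k `<=` F k by case: (HC k).
  have PC k : (P (F k `\` C k) <= (e / 2 / (2 ^ k.+1)%:R)%:E)%E by case: (HC k).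
  pose B K := \big[setU/set0]_(k < K) F k.
  have mB K : measurable (B K : set UT) by apply: bigsetU_measurable => k _.
  have ndB : nondecreasing_seq B.
    by move=> n m nm; apply/subsetPset; exact: subset_bigsetU.
  have UB : \bigcup_K B K = \bigcup_k F k.
    apply/seteqP; split => x.
    - by move=> [K _]; apply: bigsetU_bigcup.
    - move=> [k _ Fkx]; exists k.+1 => //; exact: (bigsetU_sup (ltnSn k)).
  have mUB : measurable (\bigcup_K B K : set UT) by exact: bigcupT_measurable.
  have cvB := nondecreasing_cvg_mu (mu := P) mB mUB ndB.
  rewrite UB in cvB.
  have [K _ HK] := ecvg_lb (Pfin mU) cvB e20.
  have {}HK : (P (\bigcup_k F k) - (e / 2)%:E <= P (B K))%E by exact: HK K (leqnn K).
  exists (\big[setU/set0]_(k < K) C k); split.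
  + by apply: closed_bigsetU => k _.
  + rewrite -bigcup_mkord => x [k _ Ckx]; exists k => //; exact: CF.
  + have BU : B K `<=` \bigcup_k F k by apply: bigsetU_bigcup.
    have sub : \bigcup_k F k `\` \big[setU/set0]_(k < K) C k `<=`
        (\bigcup_k F k `\` B K) `|` \bigcup_k (F k `\` C k).
      move=> x [Ux nCx]; have [BKx|nBKx] := pselect (B K x); last by left.
      right; move: BKx; rewrite /B -bigcup_mkord => -[k /= kK Fkx].
      exists k => //; split => // Ckx; apply: nCx; rewrite -bigcup_mkord.
      by exists k.
    have mD k : measurable (F k `\` C k : set UT).
      by apply: measurableD => //; apply: closed_UT.
    have mY : measurable ((\bigcup_k F k) `\` B K : set UT) by exact: measurableD.
    have mZ : measurable (\bigcup_k (F k `\` C k) : set UT).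
      exact: bigcupT_measurable.
    have mX : measurable (\bigcup_k F k `\` \big[setU/set0]_(k < K) C k : set UT).
      apply: measurableD => //; apply: bigsetU_measurable => k _.
      exact: closed_UT.
    apply: (le_trans (le_measure _ (mem_set mX) (mem_set (measurableU _ _ mY mZ)) sub)).
    apply: (le_trans (measureU2 _ mY mZ)).
    have -> : (e%:E = (e / 2)%:E + (e / 2)%:E)%E by rewrite -EFinD -splitr.
    apply: leeD.
    * have := msplit P (mB K) mU BU.
      move: HK; rewrite -[P (B K)](fineK (Pfin (mB K))) -[P (\bigcup_k F k)](fineK (Pfin mU)).
      rewrite -[P (_ `\` B K)](fineK (Pfin mY)).
      rewrite -?EFinD -?EFinB !lee_fin => h1 [h2].
      by rewrite -[X in (X <= _)%E](fineK (Pfin mY)) lee_fin; lra.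
    * apply: (le_trans (measure_sigma_subadditive P mD mZ (@subset_refl _ _))).
      apply: le_trans (epsilon_trick0 xpredT (ltW e20)).
      by apply: lee_nneseries => [k _ _ //|k _]; exact: PC.
- have [G HG] := choice (fun k => ((RF k) _ (pos k _ e0)).2).
  have cG k : closed (G k) by case: (HG k).
  have GF k : G k `<=` ~` F k by case: (HG k).
  have PG k : (P (~` F k `\` G k) <= (e / (2 ^ k.+1)%:R)%:E)%E by case: (HG k).
  exists (\bigcap_k G k); split.
  + by apply: closed_bigI => k _.
  + move=> x Gx [k _ Fkx]; exact: (GF k x (Gx k I) Fkx).
  + have sub : ~` (\bigcup_k F k) `\` \bigcap_k G k `<=` \bigcup_k (~` F k `\` G k).
      move=> x [nUx nGx]; have [k nGkx] : exists k, ~ G k x.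
        by apply/existsNP => allG; apply: nGx => k _; exact: allG.
      exists k => //; split => // Fkx; apply: nUx; by exists k.
    have mD k : measurable (~` F k `\` G k : set UT).
      by apply: measurableD; [exact: measurableC | exact: closed_UT].
    have mX : measurable (~` (\bigcup_k F k) `\` \bigcap_k G k : set UT).
      apply: measurableD; first exact: measurableC.
      by apply: bigcapT_measurable => k; exact: closed_UT.
    apply: (le_trans (measure_sigma_subadditive P mD mX sub)).
    apply: le_trans (epsilon_trick0 xpredT (ltW e0)).
    by apply: lee_nneseries => [k _ _ //|k _]; exact: PG.
Qed.


Lemma Reg_borel (S : set T) : measurable (S : set BT) -> Reg S.
Proof.
move=> mS.
apply: (@dynkin_induction _ BT (@open T) Reg _ _ _ _ _ _ S mS) => //.
- exact: openI.
- exact: Reg_T.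
- by move=> V oV; exact: Reg_open.
- by move=> S' _ RS; exact: Reg_compl.
- move=> F mF _ RF; apply: Reg_bigcup => // k; apply: borel_univ; exact: mF.
Qed.

Lemma mfin (m : {measure set UT -> \bar R}) (X : set UT) :
  (m setT < +oo)%E -> measurable X -> m X \is a fin_num.
Proof.
move=> mT mX; rewrite ge0_fin_numE //; apply: le_lt_trans mT.
by apply: le_measure; rewrite ?inE.
Qed.

Lemma PnT n : (Pn n setT < +oo)%E.
Proof.
rewrite PnE; apply: le_lt_trans PTfin; apply: le_measure; rewrite ?inE //.
exact: measurableI.
Qed.

Lemma fsplit (m : {measure set UT -> \bar R}) (X Y : set UT) :
  (m setT < +oo)%E -> measurable X -> measurable Y -> X `<=` Y ->
  fine (m Y) = fine (m X) + fine (m (Y `\` X)).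
Proof.
move=> mT mX mY XY; rewrite (msplit m mX mY XY) fineD //; apply: mfin => //.
exact: measurableD.
Qed.

Lemma fle (m : {measure set UT -> \bar R}) (X Y : set UT) :
  (m setT < +oo)%E -> measurable X -> measurable Y -> X `<=` Y ->
  fine (m X) <= fine (m Y).
Proof.
move=> mT mX mY XY; apply: fine_le; rewrite ?mfin //.
by apply: le_measure; rewrite ?inE.
Qed.

Lemma fPn n (X : set UT) : measurable X -> fine (Pn n X) <= fine (P X).
Proof.
move=> mX; rewrite PnE; apply: fle => //; first exact: PTfin.
exact: measurableI.
Qed.

Lemma Good_borel (S : set T) : measurable (S : set BT) ->
  Pn n S @[n --> \oo] --> Q S.
Proof.
move=> mS; have mSU := borel_univ mS.
rewrite -(fineK (Qfin mSU)); apply: ecvg_from => e e0.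
have e20 : 0 < e / 2 by rewrite divr_gt0.
have [[F [cF FS PF]] [G [cG GS PG]]] := Reg_borel mS e20.
have oV : open (~` G) by exact: closed_openC.
have mF := closed_UT cF; have mV := open_UT oV.
have SV : S `<=` ~` G by move=> x Sx Gx; exact: GS x Gx Sx.
have VS : ~` G `\` S = ~` S `\` G by rewrite !setDE setIC.
have mVS : measurable (~` G `\` S : set UT) by exact: measurableD.
have mSF : measurable (S `\` F : set UT) by exact: measurableD.
have PF' : fine (P (S `\` F)) <= e / 2.
  by rewrite -lee_fin fineK ?mfin //; exact: PTfin.
have PG' : fine (P (~` G `\` S)) <= e / 2.
  by rewrite -lee_fin fineK ?mfin ?VS //; [exact: PTfin|rewrite -VS].
have q1 := fle QTfin mF mSU FS.
have q2 := fle QTfin mSU mV SV.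
have := closed_ub cF e20; have := open_lb oV e20.
apply: filterS2 => n hV hF.
have s1 := fsplit (PnT n) mF mSU FS.
have s2 := fsplit (PnT n) mSU mV SV.
have p1 := fPn n mSF.
have p2 := fPn n mVS.
move: hV hF.
rewrite -[Pn n (~` G)](fineK (mfin (PnT n) mV)) -[Pn n F](fineK (mfin (PnT n) mF)).
rewrite -[Q (~` G)](fineK (Qfin mV)) -[Q F](fineK (Qfin mF)).
rewrite -[Pn n S](fineK (mfin (PnT n) mSU)).
rewrite -?EFinN -!EFinD !lee_fin => hV hF; split; lra.
Qed.


Definition Kc : set (set T) := [set E | exists B C : set T,
  [/\ measurable (B : set BT), measurable (C : set BT), B `<=` E, E `<=` C &
      P (C `\` B) = 0%E]].

Lemma Kc_sigma : sigma_algebra setT Kc.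
Proof.
split.
- have m0 : measurable (set0 : set BT) by exact: measurable0.
  exists set0, set0; split => //.
  by rewrite setDv measure0.
- move=> E [B [C [mB mC BE EC PCB]]]; exists (~` C), (~` B); split.
  + exact: measurableC.
  + exact: measurableC.
  + by move=> x nCx; split => // Ex; apply: nCx; exact: EC.
  + by move=> x [_ nEx] Bx; apply: nEx; exact: BE.
  + by rewrite setDE setCK setIC.
- move=> F HF.
  have : forall k, exists p : set T * set T,
      [/\ measurable (p.1 : set BT), measurable (p.2 : set BT), p.1 `<=` F k,
          F k `<=` p.2 & P (p.2 `\` p.1) = 0%E].
    by move=> k; have [B [C H]] := HF k; exists (B, C).
  case/choice => p Hp.
  exists (\bigcup_k (p k).1), (\bigcup_k (p k).2); split.
  + by apply: bigcupT_measurable => k; case: (Hp k).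
  + by apply: bigcupT_measurable => k; case: (Hp k).
  + by move=> x [k _ px]; exists k => //; case: (Hp k) => _ _ + _ _; apply.
  + by move=> x [k _ px]; exists k => //; case: (Hp k) => _ _ _ + _; apply.
  + have mD k : measurable ((p k).2 `\` (p k).1 : set UT).
      by apply: borel_univ; case: (Hp k) => m1 m2 _ _ _; exact: measurableD.
    have mX : measurable (\bigcup_k (p k).2 `\` \bigcup_k (p k).1 : set UT).
      apply: borel_univ; apply: measurableD; apply: bigcupT_measurable => k;
        by case: (Hp k).
    have sub : \bigcup_k (p k).2 `\` \bigcup_k (p k).1 `<=`
               \bigcup_k ((p k).2 `\` (p k).1).
      move=> x [[k _ p2x] nB]; exists k => //; split => // p1x; apply: nB.
      by exists k.
    apply/eqP; rewrite eq_le measure_ge0 andbT.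
    apply: (le_trans (measure_sigma_subadditive P mD mX sub)).
    by rewrite eseries0 // => k _ _; case: (Hp k).
Qed.


Lemma univ_Kc : universal_sets R (T:=T) `<=` Kc.
Proof.
move=> E hE.
have [B [N [mB [N' [mN' muN' NN']] ->]]] := hE mu (sigma_finiteT mu).
have mN'U : measurable (N' : set UT) by exact: borel_univ.
exists B, (B `|` N'); split => //.
- exact: measurableU.
- by move=> x [Bx|Nx]; [left|right; exact: NN'].
- have PN' : P N' = 0%E.
    have := @hP N' set0 mN' (negligible_set0 mu); rewrite setU0 muN'.
    by apply.
  apply/eqP; rewrite eq_le measure_ge0 andbT -PN'.
  apply: le_measure; rewrite ?inE //.
    by apply: borel_univ; apply: measurableD => //; exact: measurableU.
  by move=> x [[Bx|Nx] nBx].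
Qed.

Lemma main_res (E : set UT) : measurable E -> Pn n E @[n --> \oo] --> Q E.
Proof.
move=> mE.
have : Kc E by exact: (smallest_sub Kc_sigma univ_Kc mE).
move=> [B [C [mB mC BE EC PCB]]].
have mBU := borel_univ mB; have mCU := borel_univ mC.
have mCB : measurable (C `\` B : set BT) by exact: measurableD.
have mCBU := borel_univ mCB.
have BC : B `<=` C by move=> x Bx; apply: EC; exact: BE.
have PnCB n : Pn n (C `\` B) = 0%E.
  apply/eqP; rewrite eq_le measure_ge0 andbT -PCB PnE.
  by apply: le_measure; rewrite ?inE //; exact: measurableI.
have QCB : Q (C `\` B) = 0%E.
  have h := Good_borel mCB.
  have h0 : (fun n => Pn n (C `\` B)) @ \oo --> 0%E.
    rewrite (_ : (fun n => _) = fun=> 0%E); first exact: cvg_cst.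
    by apply: funext => n; exact: PnCB.
  by rewrite -(cvg_lim _ h) // -(cvg_lim _ h0).
have PnEB n : Pn n E = Pn n B.
  apply/eqP; rewrite eq_le; apply/andP; split.
    rewrite -[Pn n B]adde0 -(PnCB n) -msplit //.
    by apply: le_measure; rewrite ?inE.
  by apply: (@le_measure _ _ _ (Pn n) B E); rewrite ?inE.
have QEB : Q E = Q B.
  apply/eqP; rewrite eq_le; apply/andP; split.
    rewrite -[Q B]adde0 -QCB -msplit //.
    by apply: le_measure; rewrite ?inE.
  by apply: (@le_measure _ _ _ Q B E); rewrite ?inE.
rewrite QEB (_ : (fun n => _) = fun n => Pn n B); first exact: Good_borel.
by apply: funext => n; exact: PnEB.
Qed.

End Main.

Unset Implicit Arguments.

Theorem lemma11 (R : realType) (T : pmetricType R)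
  (hsep : separable T)
  (mu : probability (borel_t T) R)
  (P : {measure set (univ_t R T) -> \bar R})
  (hP : is_completion_of mu P)
  (nuQ : {measure set (borel_t T) -> \bar R})
  (Q : {measure set (univ_t R T) -> \bar R})
  (hQ : is_completion_of nuQ Q)
  (A : nat -> set (univ_t R T)) (mA : forall n, measurable (A n))
  (hweak : forall f : T -> R, continuous f ->
     (exists M : R, forall x, `|f x| <= M) ->
     (\int[mrestr P (mA n)]_x (f x)%:E)%E @[n --> \oo] -->
       (\int[Q]_x (f x)%:E)%E) :
  forall E : set (univ_t R T), measurable E ->
    mrestr P (mA n) E @[n --> \oo] --> Q E.
Proof.
move=> E mE; exact: (main_res hP hweak mE).
Qed.
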